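(* Let $L$ be a positive integer and let $X$ and $X_{\mathcal{K}}$, $\mathcal{K}\subseteq\mathcal{I}_L$, be jointly distributed random variables on finite sets with an arbitrary fixed joint distribution. Then the rate region $\{(R_1,\dots,R_L)\in\mathbb{R}^L: R_{\mathcal{K}}\ge\psi(\mathcal{K})\text{ for all }\emptyset\subset\mathcal{K}\subseteq\mathcal{I}_L\}$ is a contra-polymatroid.
   Context: $\mathcal{I}_L=\{1,\dots,L\}$. For a set $\mathcal{A}$, $2^{\mathcal{A}}$ is its power set; for a collection of sets $\mathcal{B}$, $X_{(\mathcal{B})}=\{X_{\mathcal{A}}:\mathcal{A}\in\mathcal{B}\}$ (so $X_{(\emptyset)}$ is a constant, while $X_{\emptyset}$ is the random variable indexed by the empty set). $R_{\mathcal{K}}=\sum_{k\in\mathcal{K}}R_k$. The set function $\psi$ on $2^{\mathcal{I}_L}$ is $\psi(\mathcal{K})=(|\mathcal{K}|-1)I(X;X_{\emptyset})-H(X_{(2^{\mathcal{K}})}|X)+\sum_{\mathcal{A}\subseteq\mathcal{K}}H(X_{\mathcal{A}}|X_{(2^{\mathcal{A}}-\{\mathcal{A}\})})$. A contra-polymatroid (in the sense of Edmonds) is a set of the form $\{(R_1,\dots,R_L): R_{\mathcal{K}}\ge g(\mathcal{K})\ \forall\,\emptyset\subset\mathcal{K}\subseteq\mathcal{I}_L\}$ where $g:2^{\mathcal{I}_L}\to\mathbb{R}$ satisfies $g(\emptyset)=0$, $g(\mathcal{S})\le g(\mathcal{T})$ whenever $\mathcal{S}\subset\mathcal{T}$,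 and $g(\mathcal{S})+g(\mathcal{T})\le g(\mathcal{S}\cup\mathcal{T})+g(\mathcal{S}\cap\mathcal{T})$ for all $\mathcal{S},\mathcal{T}$. *)

(* Defs.v *)
From HB Require Import structures.
From mathcomp Require Import all_boot all_order all_algebra.
From mathcomp Require Import reals exp.
Set Implicit Arguments. Unset Strict Implicit. Unset Printing Implicit Defensive.
Import Order.TTheory GRing.Theory Num.Theory.
Local Open Scope ring_scope.

(* Random variables on finite sets with an arbitrary joint distribution are
   modelled as functions on a common finite sample space [Omega] carrying a
   probability mass function [P].  A (joint) random variable is identified,
   for entropy purposes, through the boolean relation "takes the same value". *)
Section Info.
Variables (R : realType) (Omega : finType) (P : Omega -> R).

Definition ent (e : rel Omega) : R :=
  - \sum_(w : Omega) P w * ln (\sum_(w' : Omega | e w w') P w').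

Definition rv_rel (T : eqType) (Y : Omega -> T) : rel Omega :=
  fun w w' => Y w == Y w'.

Definition joint_rel (e1 e2 : rel Omega) : rel Omega :=
  fun w w' => e1 w w' && e2 w w'.

Definition cond_ent (e1 e2 : rel Omega) : R := ent (joint_rel e1 e2) - ent e2.

Definition mutinf (e1 e2 : rel Omega) : R :=
  ent e1 + ent e2 - ent (joint_rel e1 e2).

Variables (L : nat) (A : finType) (B : {set 'I_L} -> finType).
Variables (X : Omega -> A) (Xs : forall K : {set 'I_L}, Omega -> B K).

(* X_(C) = { X_K : K in C } for a collection C of subsets of I_L;
   X_(emptyset) is a constant (the relation is always true). *)
Definition coll_rel (C : {set {set 'I_L}}) : rel Omega :=
  fun w w' => [forall K in C, Xs K w == Xs K w'].

Definition psi (K : {set 'I_L}) : R :=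
  (#|K|%:R - 1) * mutinf (rv_rel X) (rv_rel (Xs set0))
  - cond_ent (coll_rel (powerset K)) (rv_rel X)
  + \sum_(S in powerset K) cond_ent (rv_rel (Xs S)) (coll_rel (powerset S :\ S)).

End Info.

Definition rate_sum (R : realType) (L : nat) (r : 'I_L -> R) (K : {set 'I_L}) : R :=
  \sum_(k in K) r k.

Definition contra_polymatroid (R : realType) (L : nat) (Reg : ('I_L -> R) -> Prop) : Prop :=
  exists g : {set 'I_L} -> R,
    [/\ g set0 = 0,
        (forall S T : {set 'I_L}, S \proper T -> g S <= g T),
        (forall S T : {set 'I_L}, g S + g T <= g (S :|: T) + g (S :&: T)) &
        (forall r : 'I_L -> R,
           Reg r <-> (forall K : {set 'I_L}, K != set0 -> g K <= rate_sum r K))].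

(* Main.v *)
Require Import Defs.
From HB Require Import structures.
From mathcomp Require Import all_boot all_order all_algebra.
From mathcomp Require Import reals exp.
From mathcomp Require Import lra ring.
Import Order.TTheory GRing.Theory Num.Theory.
Local Open Scope ring_scope.
Set Implicit Arguments. Unset Strict Implicit. Unset Printing Implicit Defensive.

Section Ent.
Variables (R : realType) (Omega : finType) (P : Omega -> R).
Hypothesis P_ge0 : forall w, 0 <= P w.
Hypothesis P_sum1 : \sum_(w : Omega) P w = 1.

Definition ER (e : rel Omega) :=
  (forall w, e w w) /\ (forall w1 w2 w, e w1 w2 -> e w1 w = e w2 w).

Lemma ER_sym (e : rel Omega) : ER e -> forall x y, e x y -> e y x.
Proof. by move=> [r t] x y exy; rewrite -(t _ _ _ exy) r. Qed.

Lemma ER_tr (e : rel Omega) : ER e -> forall x y z, e x y -> e x z -> e y z.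
Proof. by move=> [r t] x y z exy; rewrite (t _ _ _ exy). Qed.

Definition cs (e : rel Omega) w := \sum_(w' | e w w') P w'.

Lemma cs_ge0 (e : rel Omega) w : 0 <= cs e w.
Proof. by apply: sumr_ge0. Qed.

Lemma cs_ge (e : rel Omega) w : e w w -> P w <= cs e w.
Proof.
move=> eww; rewrite /cs (bigD1 w) //= lerDl; apply: sumr_ge0 => *; exact: P_ge0.
Qed.

Lemma cs_eq (e : rel Omega) w1 w2 : ER e -> e w1 w2 -> cs e w1 = cs e w2.
Proof. by move=> [r t] e12; apply: eq_bigl => w; rewrite (t _ _ _ e12). Qed.

Lemma cs_le (e1 e2 : rel Omega) w : (forall x y, e1 x y -> e2 x y) -> cs e1 w <= cs e2 w.
Proof.
move=> sub; rewrite /cs [X in _ <= X]big_mkcond [X in X <= _]big_mkcond /=.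
apply: ler_sum => i _; case: ifP => h; first by rewrite (sub _ _ h).
by case: ifP.
Qed.

Lemma ent_ext (e1 e2 : rel Omega) : e1 =2 e2 -> ent P e1 = ent P e2.
Proof.
move=> h; rewrite /ent; congr (- _); apply: eq_bigr => w _.
by congr (_ * ln _); apply: eq_bigl => w'; rewrite h.
Qed.

Lemma ent_true : ent P (fun _ _ => true) = 0.
Proof. by rewrite /ent P_sum1 ln1 big1 ?oppr0 // => w _; rewrite mulr0. Qed.

Lemma ent_mono (e1 e2 : rel Omega) : (forall w, e1 w w) -> (forall x y, e1 x y -> e2 x y) ->
  ent P e2 <= ent P e1.
Proof.
move=> r sub; rewrite /ent lerN2; apply: ler_sum => w _.
have [->|Pw] := eqVneq (P w) 0; first by rewrite !mul0r.
have Pp : 0 < P w by rewrite lt_def Pw P_ge0.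
apply: ler_wpM2l; first exact: P_ge0.
have h1 := cs_ge (r w).
rewrite ler_ln ?posrE; last by apply: lt_le_trans (cs_le _ sub); apply: lt_le_trans h1.
- exact: cs_le.
- exact: lt_le_trans h1.
Qed.


Lemma sum_sub (p q : pred Omega) : (forall w, p w -> q w) ->
  \sum_(w | p w) P w <= \sum_(w | q w) P w.
Proof.
move=> sub; rewrite [X in _ <= X]big_mkcond [X in X <= _]big_mkcond /=.
apply: ler_sum => i _; case: ifP => h; first by rewrite (sub _ h).
by case: ifP.
Qed.

Lemma ER_joint (e1 e2 : rel Omega) : ER e1 -> ER e2 -> ER (joint_rel e1 e2).
Proof.
move=> [r1 t1] [r2 t2]; split; first by move=> w; rewrite /joint_rel r1 r2.
move=> w1 w2 w /andP[h1 h2]; by rewrite /joint_rel (t1 _ _ _ h1) (t2 _ _ _ h2).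
Qed.

Lemma exch (p : rel Omega) (F : Omega -> Omega -> R) :
  \sum_w \sum_(v | p w v) F w v = \sum_v \sum_(w | p w v) F w v.
Proof.
under eq_bigr do rewrite big_mkcond.
rewrite exchange_big /=; apply: eq_bigr => v _; by rewrite [RHS]big_mkcond.
Qed.

Lemma mergecond (q : pred Omega) (p : rel Omega) (F : Omega -> Omega -> R) :
  \sum_(w | q w) \sum_(v | p w v) F w v = \sum_w \sum_(v | q w && p w v) F w v.
Proof.
rewrite big_mkcond /=; apply: eq_bigr => w _; case: (q w) => //=.
by rewrite big_pred0.
Qed.

Section CMI.
Variables (e1 e2 e3 : rel Omega).
Hypotheses (E1 : ER e1) (E2 : ER e2) (E3 : ER e3).
Let e123 := joint_rel e1 (joint_rel e2 e3).
Let e13 := joint_rel e1 e3.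
Let e23 := joint_rel e2 e3.
Let a := cs e123. Let b := cs e3. Let c := cs e13. Let d := cs e23.

Lemma inner1 u v : \sum_(w | e13 u w && e23 w v) P w / a w <= (e3 u v)%:R.
Proof.
case: (pickP (fun w => e13 u w && e23 w v)) => [w0 /andP[h13 h23] | none]; last first.
  by rewrite big_pred0 // ler0n.
move/andP: h13 => [h1 h3]; move/andP: h23 => [h2' h3'].
have e3uv : e3 u v by rewrite (E3.2 _ _ _ h3).
rewrite e3uv.
have mem : forall w, e13 u w && e23 w v -> e123 w0 w.
  move=> w /andP[/andP[k1 k3] /andP[k2 k3']].
  apply/andP; split; first exact: (ER_tr E1 h1 k1).
  apply/andP; split; last exact: (ER_tr E3 h3 k3).
  exact: (ER_tr E2 (ER_sym E2 h2') (ER_sym E2 k2)).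
have E123 : ER e123 by apply: ER_joint => //; apply: ER_joint.
rewrite (eq_bigr (fun w => P w / a w0)); last first.
  by move=> w /mem h; rewrite /a (cs_eq E123 h).
rewrite -big_distrl /=.
have [a0|an0] := eqVneq (a w0) 0; first by rewrite a0 invr0 mulr0.
apply: (le_trans (y := a w0 / a w0)); last by rewrite mulfV.
apply: ler_wpM2r; first by rewrite invr_ge0 cs_ge0.
exact: sum_sub.
Qed.

Lemma inner2 u : \sum_(w | e13 u w) P w * d w / a w <= b u.
Proof.
rewrite (eq_bigr (fun w => \sum_(v | e23 w v) P v * (P w / a w))); last first.
  by move=> w _; rewrite /d /cs mulrAC big_distrr /=; apply: eq_bigr => v _; ring.
rewrite mergecond exch.
rewrite /b /cs [X in _ <= X]big_mkcond /=; apply: ler_sum => v _.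
rewrite -mulr_sumr; have := inner1 u v; case: (e3 u v) => /= h.
  by rewrite -[X in _ <= X]mulr1; apply: ler_wpM2l.
by apply: (le_trans (y := P v * 0)); [apply: ler_wpM2l|rewrite mulr0].
Qed.

Lemma S_le1 : \sum_w P w * (c w * d w / (a w * b w)) <= 1.
Proof.
rewrite (eq_bigr (fun w => \sum_(u | e13 w u) P u * (P w * d w / (a w * b w)))); last first.
  by move=> w _; rewrite /c /cs -!mulrA mulrCA big_distrl /=; apply: eq_bigr => v _; ring.
rewrite exch.
rewrite (eq_bigr (fun u => P u / b u * \sum_(w | e13 u w) P w * d w / a w)); last first.
  have E13 : ER e13 by apply: ER_joint.
  move=> u _; rewrite big_distrr /=; apply: eq_big => w.
    by apply/idP/idP => /(ER_sym E13).
  move=> h; have /andP[_ h3] := h.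
  rewrite /b (cs_eq E3 h3) invfM; ring.
apply: (le_trans (y := \sum_u P u)); last by rewrite P_sum1.
apply: ler_sum => u _.
have [b0|bn0] := eqVneq (b u) 0.
  by rewrite b0 invr0 mulr0 mul0r.
apply: (le_trans (y := P u / b u * b u)); last by rewrite divfK.
apply: ler_wpM2l; first by rewrite divr_ge0 ?cs_ge0.
exact: inner2.
Qed.

Lemma cmi : ent P e123 + ent P e3 <= ent P e13 + ent P e23.
Proof.
have key : \sum_w (P w * ln (c w) + P w * ln (d w) - P w * ln (a w) - P w * ln (b w)) <= 0.
  apply: (le_trans (y := \sum_w (P w * (c w * d w / (a w * b w)) - P w))).
    apply: ler_sum => w _.
    have [->|Pn0] := eqVneq (P w) 0; first by rewrite !mul0r; lra.
    have Pp : 0 < P w by rewrite lt_def Pn0 P_ge0.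
    have rfl : forall e : rel Omega, ER e -> e w w by move=> e [r _]; exact: r.
    have E13 : ER e13 by apply: ER_joint.
    have E23 : ER e23 by apply: ER_joint.
    have E123 : ER e123 by apply: ER_joint => //; apply: ER_joint.
    have ap : 0 < a w by apply: lt_le_trans (cs_ge (rfl _ E123)).
    have bp : 0 < b w by apply: lt_le_trans (cs_ge (rfl _ E3)).
    have cp : 0 < c w by apply: lt_le_trans (cs_ge (rfl _ E13)).
    have dp : 0 < d w by apply: lt_le_trans (cs_ge (rfl _ E23)).
    set x := c w * d w / (a w * b w).
    have xp : 0 < x by rewrite /x divr_gt0 // mulr_gt0.
    have lnx : ln x = ln (c w) + ln (d w) - ln (a w) - ln (b w).
      rewrite /x ln_div ?posrE ?mulr_gt0 // !lnM ?posrE //; ring.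
    have : ln x <= x - 1.
      have := @le_ln1Dx R (x - 1); rewrite addrCA subrr addr0; apply; lra.
    rewrite lnx => hl.
    have : P w * (ln (c w) + ln (d w) - ln (a w) - ln (b w)) <= P w * (x - 1).
      by apply: ler_wpM2l => //; apply: ltW.
    rewrite !mulrDr !mulrN mulr1; lra.
  rewrite sumrB P_sum1; have := S_le1; lra.
move: key; rewrite !sumrB !big_split /= /ent /a /b /c /d /cs; lra.
Qed.

End CMI.

Lemma ER_rv (T : eqType) (Y : Omega -> T) : ER (rv_rel Y).
Proof. by split=> [w|w1 w2 w /eqP h]; rewrite /rv_rel ?h. Qed.

Lemma ER_true : ER (fun _ _ => true).
Proof. by []. Qed.

Lemma mutinf_ge0 (e1 e2 : rel Omega) : ER e1 -> ER e2 -> 0 <= mutinf P e1 e2.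
Proof.
move=> E1 E2; have := cmi E1 E2 ER_true.
rewrite ent_true (@ent_ext (joint_rel e1 (joint_rel e2 _)) (joint_rel e1 e2)); last first.
  by move=> w w'; rewrite /joint_rel andbT.
rewrite (@ent_ext (joint_rel e1 (fun _ _ => true)) e1); last by move=> w w'; rewrite /joint_rel andbT.
rewrite (@ent_ext (joint_rel e2 (fun _ _ => true)) e2); last by move=> w w'; rewrite /joint_rel andbT.
rewrite /mutinf; lra.
Qed.

Section Coll.
Variables (L : nat) (A : finType) (B : {set 'I_L} -> finType).
Variables (X : Omega -> A) (Xs : forall K : {set 'I_L}, Omega -> B K).
Let x := rv_rel X.
Let coll := coll_rel Xs.

Lemma ER_coll (C : {set {set 'I_L}}) : ER (coll C).
Proof.
split=> [w|w1 w2 w h]; first by apply/forall_inP.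
apply/forall_inP/forall_inP => h' K KC.
  by rewrite -(eqP (forall_inP h K KC)) h'.
by rewrite (eqP (forall_inP h K KC)) h'.
Qed.

Lemma coll_sub (C D : {set {set 'I_L}}) w w' : C \subset D -> coll D w w' -> coll C w w'.
Proof. by move=> /subsetP sub /forall_inP h; apply/forall_inP => K /sub /h. Qed.

Lemma coll_U (C D : {set {set 'I_L}}) : joint_rel (coll C) (coll D) =2 coll (C :|: D).
Proof.
move=> w w'; apply/andP/forall_inP.
  by move=> [/forall_inP h1 /forall_inP h2] K; rewrite inE => /orP[/h1|/h2].
by move=> h; split; apply/forall_inP => K KC; apply: h; rewrite inE KC ?orbT.
Qed.

Lemma coll1 (S : {set 'I_L}) w w' : coll [set S] w w' = rv_rel (Xs S) w w'.
Proof.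
apply/forall_inP/idP; first by move=> h; apply: h; rewrite inE.
by move=> h K; rewrite inE => /eqP ->.
Qed.

Lemma coll0 w w' : coll set0 w w'.
Proof. by apply/forall_inP => K; rewrite inE. Qed.

Let G (C : {set {set 'I_L}}) := ent P (joint_rel (coll C) x).
Let wt (S : {set 'I_L}) := cond_ent P (rv_rel (Xs S)) (coll (powerset S :\ S)).

Lemma G_step (S : {set 'I_L}) (C : {set {set 'I_L}}) : powerset S :\ S \subset C -> G (S |: C) - G C <= wt S.
Proof.
move=> sub.
have := cmi (ER_rv (Xs S)) (ER_joint (ER_coll C) (ER_rv X)) (ER_coll (powerset S :\ S)).
rewrite (@ent_ext (joint_rel (rv_rel (Xs S)) _) (joint_rel (coll (S |: C)) x)); last first.
  move=> w w'; rewrite /joint_rel -coll_U /joint_rel coll1.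
  case h: (coll C w w'); last by rewrite !andbF.
  by rewrite (coll_sub sub h) !andbT.
rewrite (@ent_ext (joint_rel (joint_rel (coll C) x) _) (joint_rel (coll C) x)); last first.
  move=> w w'; rewrite /joint_rel.
  case h: (coll C w w') => //=; by rewrite (coll_sub sub h) andbT.
rewrite /wt /G /cond_ent; lra.
Qed.

Lemma G_sup (C D : {set {set 'I_L}}) : G (C :|: D) + G (C :&: D) <= G C + G D.
Proof.
have := cmi (ER_coll C) (ER_coll D) (ER_joint (ER_coll (C :&: D)) (ER_rv X)).
have sC : C :&: D \subset C by apply: subsetIl.
have sD : C :&: D \subset D by apply: subsetIr.
rewrite (@ent_ext (joint_rel (coll C) (joint_rel (coll D) _)) (joint_rel (coll (C :|: D)) x)); last first.
  move=> w w'; rewrite /joint_rel -coll_U /joint_rel.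
  case h: (coll C w w'); last by [].
  case h': (coll D w w') => //=; by rewrite (coll_sub sC h).
rewrite (@ent_ext (joint_rel (coll C) _) (joint_rel (coll C) x)); last first.
  move=> w w'; rewrite /joint_rel.
  case h: (coll C w w') => //=; by rewrite (coll_sub sC h).
rewrite (@ent_ext (joint_rel (coll D) _) (joint_rel (coll D) x)); last first.
  move=> w w'; rewrite /joint_rel.
  case h: (coll D w w') => //=; by rewrite (coll_sub sD h).
rewrite /G; lra.
Qed.

Definition downc (D : {set {set 'I_L}}) := forall S T : {set 'I_L}, T \in D -> S \subset T -> S \in D.

Lemma G_tele (D : {set {set 'I_L}}) : downc D -> forall n (C : {set {set 'I_L}}), C \subset D -> #|D :\: C| = n ->
  G D - G C <= \sum_(S in D :\: C) wt S.
Proof.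
move=> dD; elim=> [|n IH] C sub cn.
  have /eqP e0 : D :\: C == set0 by rewrite -cards_eq0 cn.
  have -> : D = C.
    apply/eqP; rewrite eqEsubset sub andbT.
    apply/subsetP => S SD; apply: contraT => nC; have : S \in D :\: C by rewrite inE nC SD.
    by rewrite e0 inE.
  by rewrite subrr setDv big_set0.
have [S0 S0in] : exists S0, S0 \in D :\: C.
  by apply/set0Pn; rewrite -cards_eq0 cn.
case: (@arg_minnP _ S0 (fun S : {set 'I_L} => S \in D :\: C) (fun S : {set 'I_L} => #|S|) S0in) => S Sin Smin.
have SD : S \in D by move: Sin; rewrite inE => /andP[].
have SC : S \notin C by move: Sin; rewrite inE => /andP[].
have psub : powerset S :\ S \subset C.
  apply/subsetP => T; rewrite !inE => /andP[TS sT].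
  apply: contraT => TnC.
  have TD : T \in D := dD _ _ SD sT.
  have : (#|S| <= #|T|)%N by apply: Smin; rewrite inE TnC TD.
  have : T \proper S by rewrite properEneq TS sT.
  move/proper_card => lt le; by move: (leq_trans lt le); rewrite ltnn.
have sub' : S |: C \subset D by rewrite subUset sub sub1set SD.
have eqD : D :\: (S |: C) = (D :\: C) :\ S.
  by apply/setP => T; rewrite !inE; case: (T == S); case: (T \in C); case: (T \in D).
have cn' : #|D :\: (S |: C)| = n.
  by move: cn; rewrite eqD (cardsD1 S (D :\: C)) Sin add1n => -[].
have := IH _ sub' cn'; have := G_step psub.
rewrite (big_setD1 _ Sin) /= -eqD; lra.
Qed.

Lemma psiE (K : {set 'I_L}) : psi P X Xs K =
  (#|K|%:R - 1) * mutinf P x (rv_rel (Xs set0)) - (G (powerset K) - ent P x)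
  + \sum_(S in powerset K) wt S.
Proof. by []. Qed.

Lemma downc_pow (T : {set 'I_L}) : downc (powerset T).
Proof. by move=> S U; rewrite !powersetE => h1 h2; apply: subset_trans h2 h1. Qed.

Lemma wt_ge0 (S : {set 'I_L}) : 0 <= wt S.
Proof.
rewrite /wt /cond_ent subr_ge0; apply: ent_mono.
  by move=> w; rewrite /joint_rel /rv_rel eqxx; case: (ER_coll (powerset S :\ S)) => r _; rewrite r.
by move=> w w' /andP[].
Qed.

Lemma psi0 : psi P X Xs set0 = 0.
Proof.
rewrite psiE cards0 powerset0 big_set1 /G /wt.
rewrite (@ent_ext (joint_rel (coll [set set0]) x) (joint_rel x (rv_rel (Xs set0)))); last first.
  by move=> w w'; rewrite /joint_rel coll1 andbC.
rewrite /cond_ent (@ent_ext (coll _) (fun _ _ => true)); last by move=> w w'; rewrite powerset0 setDv coll0.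
rewrite (@ent_ext (joint_rel (rv_rel (Xs set0)) _) (rv_rel (Xs set0))); last first.
  by move=> w w'; rewrite /joint_rel powerset0 setDv coll0 andbT.
rewrite ent_true /mutinf; lra.
Qed.

Lemma psi_mono (S T : {set 'I_L}) : S \proper T -> psi P X Xs S <= psi P X Xs T.
Proof.
move=> /properP[sST _].
rewrite !psiE.
have sP : powerset S \subset powerset T by rewrite powersetS.
have := @G_tele (powerset T) (@downc_pow T) _ _ sP (erefl _).
rewrite (@big_setID _ _ _ _ (powerset T) (powerset S)) /=.
have -> : powerset T :&: powerset S = powerset S by apply/setIidPr.
have I0 := mutinf_ge0 (ER_rv X) (ER_rv (Xs set0)).
have cST : (#|S| <= #|T|)%N := subset_leq_card sST.
have : (#|S|%:R - 1) * mutinf P x (rv_rel (Xs set0)) <= (#|T|%:R - 1) * mutinf P x (rv_rel (Xs set0)).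
  by apply: ler_wpM2r => //; rewrite lerD2r ler_nat.
lra.
Qed.

Lemma psi_sup (S T : {set 'I_L}) : psi P X Xs S + psi P X Xs T <= psi P X Xs (S :|: T) + psi P X Xs (S :&: T).
Proof.
rewrite !psiE.
have cnt : (#|S :|: T|%:R + #|S :&: T|%:R = #|S|%:R + #|T|%:R :> R).
  by rewrite -!natrD cardsUI.
set PS := powerset S; set PT := powerset T.
have sU : PS :|: PT \subset powerset (S :|: T).
  by rewrite subUset !powersetS subsetUl subsetUr.
have := @G_tele (powerset (S :|: T)) (@downc_pow (S :|: T)) _ _ sU (erefl _).
have := G_sup PS PT.
rewrite powersetI -/PS -/PT.
rewrite (@big_setID _ _ _ _ (powerset (S :|: T)) (PS :|: PT)) /=.
have -> : powerset (S :|: T) :&: (PS :|: PT) = PS :|: PT by apply/setIidPr.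
rewrite (@big_setID _ _ _ _ (PS :|: PT) PS) /=.
rewrite (@big_setID _ _ _ _ PT PS) /=.
have -> : (PS :|: PT) :&: PS = PS by apply/setIidPr; apply: subsetUl.
have -> : (PS :|: PT) :\: PS = PT :\: PS.
  by rewrite setDUl setDv set0U.
have -> : PT :&: PS = PS :&: PT by rewrite setIC.
set I := mutinf _ _ _.
have : (#|S :|: T|%:R - 1) * I + (#|S :&: T|%:R - 1) * I = (#|S|%:R - 1) * I + (#|T|%:R - 1) * I.
  by rewrite -!mulrDl; congr (_ * _); lra.
lra.
Qed.

End Coll.

End Ent.

Theorem lemma2 (R : realType) (Omega : finType) (P : Omega -> R)
  (P_ge0 : forall w, 0 <= P w) (P_sum1 : \sum_(w : Omega) P w = 1)
  (L : nat) (L_gt0 : (0 < L)%N)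
  (A : finType) (B : {set 'I_L} -> finType)
  (X : Omega -> A) (Xs : forall K : {set 'I_L}, Omega -> B K) :
  contra_polymatroid
    (fun r : 'I_L -> R =>
       forall K : {set 'I_L}, K != set0 ->
         psi P X Xs K <= rate_sum r K).
Proof.
exists (psi P X Xs); split.
- exact: (psi0 P_sum1 X Xs).
- move=> S T; exact: (psi_mono P_ge0 P_sum1 X Xs).
- move=> S T; exact: (psi_sup P_ge0 P_sum1 X Xs).
- by move=> r.
Qed.
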